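(* Let $\mathbf C$ be an admissible category of coframes. There is an identity-on-morphisms functor $(L,\lim_L)\mapsto(L,\operatorname{adh}_L)$ from $\mathbf C^{\mathrm{pretop}}$ to $\mathbf C^{\mathrm{adh}}$, which is right adjoint to the identity-on-morphisms functor $(L,\nu)\mapsto(L,\lim_\nu)$ from $\mathbf C^{\mathrm{adh}}$ to $\mathbf C^{\mathrm{pretop}}$. The same holds with $\mathbf C^{\mathrm{pretop}}_{\mathrm{cl}}$ in place of $\mathbf C^{\mathrm{pretop}}$.
   Context: A category of coframes has coframes as objects and coframe morphisms (preserving arbitrary infima and finite suprema); it is admissible if every powerset is an object and there are classes of index sets $\mathcal I,\mathcal J$ with morphisms exactly the monotone maps preserving existing $I$-indexed infima ($I\in\mathcal I$) and $J$-indexed suprema ($J\in\mathcal J$). Every coframe morphism $\varphi$ has a left adjoint $\varphi_!$. $\mathcal C_L$ is the set of complemented elements of $L$. A filter on $L$ is a non-empty upward-closed subset closed under binary meets ($L$ allowed); $\mathbb F L$ is the set of filters. For $\mathcal A\subseteq L$, its grill is $\mathcal A^\#=\{\ell\in L: a\wedge\ell\ne\bot\text{ for all }a\in\mathcal A\}$. A convergence $\mathbf C$-object is $(L,\lim_L)$ with $\lim_L:\mathbb F L\to L$ monotone; morphisms are $\mathbf C$-morphisms $\varphi:L\to L'$ with $\lim_{L'}\mathcal F\le\varphi(\lim_L\varphi^{-1}(\mathcal F))$. It is pretopological if $\lim_L\bigcap_i\mathcal F_i=\bigwedge_i\lim_L\mathcal F_i$ for all families of filters, and classical if $\mathcal F\cap\mathcal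 C_L=\mathcal G\cap\mathcal C_L$ implies $\lim_L\mathcal F=\lim_L\mathcal G$; $\mathbf C^{\mathrm{pretop}}$ and $\mathbf C^{\mathrm{pretop}}_{\mathrm{cl}}$ are the corresponding full subcategories. The raw adherence is $\operatorname{adh}^0_L\ell=\bigvee\{\lim_L\mathcal F:\mathcal F\in\mathbb F L,\ \ell\in\mathcal F^\#\}$, and the adherence is $\operatorname{adh}_L\ell=\bigwedge\{\operatorname{adh}^0_L a: a\in\mathcal C_L,\ a\ge\ell\}$. An adherence structure on $L$ is a monotone $\nu:L\to L$ preserving finite suprema of complemented elements and satisfying $\nu(\ell)=\bigwedge\{\nu(a):a\in\mathcal C_L,a\ge\ell\}$. An adherence $\mathbf C$-object is $(L,\nu_L)$ with $\nu_L$ an adherence structure; $\mathbf C^{\mathrm{adh}}$ has as morphisms the $\mathbf C$-morphisms $\varphi:L\to L'$ with $\nu_{L'}(\ell')\le\varphi(\nu_L(\varphi_!(\ell')))$ for all $\ell'\in L'$. For an adherence structure $\nu$, $\lim_\nu\mathcal F=\bigwedge\{\nu(a):a\in\mathcal C_L\cap\mathcal F^\#\}$. *)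

(* Defs.v *)
From Stdlib Require Import List Classical FunctionalExtensionality PropExtensionality.
Set Implicit Arguments.
Unset Strict Implicit.

(* Coframes: complete lattices in which binary joins distribute over
   arbitrary meets:  a \/ /\S = /\ { a \/ s | s in S }.                    *)
Record coframe := Coframe {
  car :> Type;
  le : car -> car -> Prop;
  inf : (car -> Prop) -> car;
  sup : (car -> Prop) -> car;
  le_refl : forall x, le x x;
  le_trans : forall x y z, le x y -> le y z -> le x z;
  le_antisym : forall x y, le x y -> le y x -> x = y;
  inf_lb : forall (S : car -> Prop) x, S x -> le (inf S) x;
  inf_glb : forall (S : car -> Prop) y, (forall x, S x -> le y x) -> le y (inf S);
  sup_ub : forall (S : car -> Prop) x, S x -> le x (sup S);
  sup_lub : forall (S : car -> Prop) y, (forall x, S x -> le x y) -> le (sup S) y;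
  join_inf_distr : forall (a : car) (S : car -> Prop),
    sup (fun z => z = a \/ z = inf S)
    = inf (fun y => exists s, S s /\ y = sup (fun z => z = a \/ z = s))
}.
Arguments le {c} _ _.
Arguments inf {c} _.
Arguments sup {c} _.

Section Ops.
Variable L : coframe.
Definition top : L := inf (fun _ => False).
Definition bot : L := sup (fun _ => False).
Definition meet (a b : L) : L := inf (fun z => z = a \/ z = b).
Definition join (a b : L) : L := sup (fun z => z = a \/ z = b).
Definition inf_fam (I : Type) (g : I -> L) : L := inf (fun x => exists i, g i = x).
Definition sup_fam (I : Type) (g : I -> L) : L := sup (fun x => exists i, g i = x).
Definition complemented (a : L) : Prop :=
  exists b, meet a b = bot /\ join a b = top.
End Ops.
Arguments top {L}.
Arguments bot {L}.

Section Powerset.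
Variable X : Type.
Definition ps_le (A B : X -> Prop) := forall x, A x -> B x.
Definition ps_inf (S : (X -> Prop) -> Prop) : X -> Prop := fun x => forall A, S A -> A x.
Definition ps_sup (S : (X -> Prop) -> Prop) : X -> Prop := fun x => exists A, S A /\ A x.

Lemma ps_ext (A B : X -> Prop) : ps_le A B -> ps_le B A -> A = B.
Proof.
  intros H1 H2; apply functional_extensionality; intro x.
  apply propositional_extensionality; split; auto.
Qed.

Lemma ps_distr (a : X -> Prop) (S : (X -> Prop) -> Prop) :
  ps_sup (fun z => z = a \/ z = ps_inf S)
  = ps_inf (fun y => exists s, S s /\ y = ps_sup (fun z => z = a \/ z = s)).
Proof.
  apply ps_ext.
  - intros x [A [[-> | ->] HA]] B [s [Hs ->]].
    + exists a; split; [left; reflexivity | exact HA].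
    + exists s; split; [right; reflexivity | exact (HA s Hs)].
  - intros x H. destruct (classic (a x)) as [Ha | Ha].
    + exists a; split; [left; reflexivity | exact Ha].
    + exists (ps_inf S); split; [right; reflexivity|].
      intros s Hs. destruct (H _ (ex_intro _ s (conj Hs eq_refl))) as [A [[-> | ->] HA]].
      * contradiction.
      * exact HA.
Qed.

Definition powerset : coframe.
Proof.
  refine (@Coframe (X -> Prop) ps_le ps_inf ps_sup _ _ ps_ext _ _ _ _ ps_distr).
  - intros A x; auto.
  - intros A B C H1 H2 x Hx; auto.
  - intros S A HA x Hx; apply Hx, HA.
  - intros S B H x Hx A HA; apply (H A HA), Hx.
  - intros S A HA x Hx; exists A; auto.
  - intros S B H x [A [HA Hx]]; apply (H A HA), Hx.
Defined.
End Powerset.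

Definition monotone (L L' : coframe) (f : L -> L') : Prop :=
  forall x y, le x y -> le (f x) (f y).

Definition coframe_morphism (L L' : coframe) (f : L -> L') : Prop :=
  (forall S : L -> Prop, f (inf S) = inf (fun y => exists x, S x /\ f x = y))
  /\ (forall s : list L,
        f (sup (fun x => In x s)) = sup (fun y => exists x, In x s /\ f x = y)).

Definition pres_inf_idx (I : Type) (L L' : coframe) (f : L -> L') : Prop :=
  forall g : I -> L, f (inf_fam g) = inf_fam (fun i => f (g i)).
Definition pres_sup_idx (J : Type) (L L' : coframe) (f : L -> L') : Prop :=
  forall g : J -> L, f (sup_fam g) = sup_fam (fun j => f (g j)).

(* An admissible category of coframes: a class of coframes (objects)
   containing every powerset, and classes of index sets I, J such that the
   morphisms are exactly the monotone maps preserving I-indexed infima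
   (I in IdxI) and J-indexed suprema (J in IdxJ); being a category of
   coframes, all these morphisms are coframe morphisms. *)
Record admissible_cat := AdmissibleCat {
  Obj : coframe -> Prop;
  IdxI : Type -> Prop;
  IdxJ : Type -> Prop;
  powerset_Obj : forall X : Type, Obj (powerset X);
  mor_is_coframe_morphism : forall (L L' : coframe) (f : L -> L'),
    Obj L -> Obj L' -> monotone f ->
    (forall I, IdxI I -> pres_inf_idx I f) ->
    (forall J, IdxJ J -> pres_sup_idx J f) ->
    coframe_morphism f
}.

Definition Mor (C : admissible_cat) (L L' : coframe) (f : L -> L') : Prop :=
  monotone f
  /\ (forall I, IdxI C I -> pres_inf_idx I f)
  /\ (forall J, IdxJ C J -> pres_sup_idx J f).

(* left adjoint phi_! of phi (exists as phi preserves arbitrary infima) *)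
Definition lower_adj (L L' : coframe) (phi : L -> L') : L' -> L :=
  fun l' => inf (fun l => le l' (phi l)).

Section Filters.
Variable L : coframe.
Definition is_filter (F : L -> Prop) : Prop :=
  (exists x, F x)
  /\ (forall x y, F x -> le x y -> F y)
  /\ (forall x y, F x -> F y -> F (meet x y)).
Definition grill (A : L -> Prop) : L -> Prop :=
  fun l => forall a, A a -> meet a l <> bot.
End Filters.

Definition preimage (L L' : coframe) (phi : L -> L') (F : L' -> Prop) : L -> Prop :=
  fun l => F (phi l).

(* A convergence structure lim : FL -> L is represented as a function on
   all subsets of L; only its values on filters are ever used. *)
Definition limT (L : coframe) := (L -> Prop) -> L.

Section Convergence.
Variable C : admissible_cat.

Definition conv_obj (L : coframe) (lim : limT L) : Prop :=
  Obj C L /\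
  forall F G : L -> Prop, is_filter F -> is_filter G ->
    (forall x, F x -> G x) -> le (lim F) (lim G).

Definition pretopological (L : coframe) (lim : limT L) : Prop :=
  forall (I : Type) (Fs : I -> L -> Prop), (forall i, is_filter (Fs i)) ->
    lim (fun x => forall i, Fs i x) = inf_fam (fun i => lim (Fs i)).

Definition classical_conv (L : coframe) (lim : limT L) : Prop :=
  forall F G : L -> Prop, is_filter F -> is_filter G ->
    (forall a, complemented a -> (F a <-> G a)) -> lim F = lim G.

Definition pretop_obj (L : coframe) (lim : limT L) : Prop :=
  conv_obj lim /\ pretopological lim.
Definition pretop_cl_obj (L : coframe) (lim : limT L) : Prop :=
  conv_obj lim /\ pretopological lim /\ classical_conv lim.

Definition conv_mor (L L' : coframe) (lim : limT L) (lim' : limT L') (phi : L -> L') : Prop :=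
  Mor C phi /\
  forall F : L' -> Prop, is_filter F -> le (lim' F) (phi (lim (preimage phi F))).

Definition adh0 (L : coframe) (lim : limT L) (l : L) : L :=
  sup (fun y => exists F, is_filter F /\ grill F l /\ y = lim F).
Definition adh (L : coframe) (lim : limT L) (l : L) : L :=
  inf (fun y => exists a, complemented a /\ le l a /\ y = adh0 lim a).

Definition adherence_structure (L : coframe) (nu : L -> L) : Prop :=
  monotone nu
  /\ (forall s : list L, (forall a, In a s -> complemented a) ->
        nu (sup (fun x => In x s)) = sup (fun y => exists x, In x s /\ nu x = y))
  /\ (forall l, nu l = inf (fun y => exists a, complemented a /\ le l a /\ y = nu a)).

Definition adh_obj (L : coframe) (nu : L -> L) : Prop :=
  Obj C L /\ adherence_structure nu.

Definition adh_mor (L L' : coframe) (nu : L -> L) (nu' : L' -> L') (phi : L -> L') : Prop :=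
  Mor C phi /\ forall l', le (nu' l') (phi (nu (lower_adj phi l'))).

Definition lim_of (L : coframe) (nu : L -> L) : limT L :=
  fun F => inf (fun y => exists a, complemented a /\ grill F a /\ y = nu a).

(* The statement, for a full subcategory P of convergence C-objects
   (P = C^pretop or C^pretop_cl):
   - G : (L,lim) |-> (L, adh_L) is an identity-on-morphisms functor P -> C^adh;
   - F : (L,nu) |-> (L, lim_nu) is an identity-on-morphisms functor C^adh -> P;
   - F is left adjoint to G: there are a unit eta : Id => G F and a counit
     eps : F G => Id, natural, satisfying the triangle identities. *)
Definition adjunction_statement (P : forall L : coframe, limT L -> Prop) : Prop :=
  (forall (L : coframe) (lim : limT L), P L lim -> adh_obj (adh lim))
  /\ (forall (L L' : coframe) (lim : limT L) (lim' : limT L') (phi : L -> L'),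
        P L lim -> P L' lim' -> conv_mor lim lim' phi -> adh_mor (adh lim) (adh lim') phi)
  /\ (forall (L : coframe) (nu : L -> L), adh_obj nu -> P L (lim_of nu))
  /\ (forall (L L' : coframe) (nu : L -> L) (nu' : L' -> L') (phi : L -> L'),
        adh_obj nu -> adh_obj nu' -> adh_mor nu nu' phi ->
        conv_mor (lim_of nu) (lim_of nu') phi)
  /\ exists (eta : forall L : coframe, (L -> L) -> L -> L)
            (eps : forall L : coframe, limT L -> L -> L),
       (forall (L : coframe) (nu : L -> L), adh_obj nu ->
          adh_mor nu (adh (lim_of nu)) (eta L nu))
       /\ (forall (L : coframe) (lim : limT L), P L lim ->
          conv_mor (lim_of (adh lim)) lim (eps L lim))
       /\ (forall (L L' : coframe) (nu : L -> L) (nu' : L' -> L') (phi : L -> L'),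
             adh_obj nu -> adh_obj nu' -> adh_mor nu nu' phi ->
             forall x, eta L' nu' (phi x) = phi (eta L nu x))
       /\ (forall (L L' : coframe) (lim : limT L) (lim' : limT L') (phi : L -> L'),
             P L lim -> P L' lim' -> conv_mor lim lim' phi ->
             forall x, eps L' lim' (phi x) = phi (eps L lim x))
       (* triangle identities: eps_{F A} o F eta_A = id, G eps_B o eta_{G B} = id *)
       /\ (forall (L : coframe) (nu : L -> L), adh_obj nu ->
             forall x, eps L (lim_of nu) (eta L nu x) = x)
       /\ (forall (L : coframe) (lim : limT L), P L lim ->
             forall x, eps L lim (eta L (adh lim) x) = x).
End Convergence.

(* Main.v *)
Require Import Defs.
From Stdlib Require Import List Classical FunctionalExtensionality PropExtensionality.

Section Lat.
Variable L : coframe.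
Implicit Types a b c x y : L.

Lemma inf_ext (S T : L -> Prop) : (forall x, S x <-> T x) -> inf S = inf T.
Proof. intro H. f_equal. apply functional_extensionality; intro x.
  apply propositional_extensionality; auto. Qed.
Lemma sup_ext (S T : L -> Prop) : (forall x, S x <-> T x) -> sup S = sup T.
Proof. intro H. f_equal. apply functional_extensionality; intro x.
  apply propositional_extensionality; auto. Qed.

Lemma meet_lb1 a b : le (meet a b) a. Proof. apply inf_lb; auto. Qed.
Lemma meet_lb2 a b : le (meet a b) b. Proof. apply inf_lb; auto. Qed.
Lemma meet_glb x a b : le x a -> le x b -> le x (meet a b).
Proof. intros; apply inf_glb; intros z [->| ->]; auto. Qed.
Lemma join_ub1 a b : le a (join a b). Proof. apply sup_ub; auto. Qed.
Lemma join_ub2 a b : le b (join a b). Proof. apply sup_ub; auto. Qed.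
Lemma join_lub x a b : le a x -> le b x -> le (join a b) x.
Proof. intros; apply sup_lub; intros z [->| ->]; auto. Qed.
Lemma bot_le x : le (@bot L) x. Proof. apply sup_lub; intros _ []. Qed.
Lemma le_top x : le x (@top L). Proof. apply inf_glb; intros _ []. Qed.
Lemma meet_comm a b : meet a b = meet b a.
Proof. apply le_antisym; apply meet_glb; auto using meet_lb1, meet_lb2. Qed.
Lemma join_comm a b : join a b = join b a.
Proof. apply le_antisym; apply join_lub; auto using join_ub1, join_ub2. Qed.
Lemma join_bot a : join a bot = a.
Proof. apply le_antisym. apply join_lub; auto using le_refl, bot_le. apply join_ub1. Qed.
Lemma le_bot x : le x bot -> x = bot.
Proof. intro; apply le_antisym; auto using bot_le. Qed.
Lemma le_trans' x y z : le x y -> le y z -> le x z. Proof. apply le_trans. Qed.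

Lemma distr a b c : join a (meet b c) = meet (join a b) (join a c).
Proof.
  unfold join at 1, meet at 1. rewrite join_inf_distr. apply inf_ext.
  intro x; split.
  - intros [s [[-> | ->] ->]]; auto.
  - intros [-> | ->]; eauto.
Qed.

Definition cpair a a' := meet a a' = bot /\ join a a' = top.

Lemma cp_sym a a' : cpair a a' -> cpair a' a.
Proof. intros [H1 H2]; split; [rewrite meet_comm|rewrite join_comm]; auto. Qed.

Lemma cp_le a a' f : cpair a a' -> meet f a = bot -> le f a'.
Proof.
  intros [H1 H2] H.
  assert (E : a' = meet (join a' f) (join a' a)).
  { rewrite <- distr, H, join_bot. reflexivity. }
  rewrite E. apply meet_glb. apply join_ub2. rewrite join_comm, H2. apply le_top.
Qed.

Lemma cp_disj a a' x : cpair a a' -> le x a' -> meet x a = bot.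
Proof.
  intros [H1 H2] H. apply le_bot. rewrite <- H1. apply meet_glb.
  apply meet_lb2. eapply le_trans. apply meet_lb1. auto.
Qed.

Lemma join_mono a b c d : le a c -> le b d -> le (join a b) (join c d).
Proof. intros. apply join_lub; eapply le_trans; [eauto|apply join_ub1|eauto|apply join_ub2]. Qed.
Lemma meet_mono a b c d : le a c -> le b d -> le (meet a b) (meet c d).
Proof. intros. apply meet_glb; eapply le_trans; [apply meet_lb1|auto|apply meet_lb2|auto]. Qed.

Lemma cp_join a a' b b' : cpair a a' -> cpair b b' -> cpair (join a b) (meet a' b').
Proof.
  intros [Ha1 Ha2] [Hb1 Hb2]; split.
  - apply le_bot. rewrite <- Ha1. apply meet_glb.
    + assert (E : a = meet (join a b) (join a b')).
      { rewrite <- distr, Hb1, join_bot. reflexivity. }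
      rewrite E at 2. apply meet_glb. apply meet_lb1.
      eapply le_trans. apply meet_lb2. eapply le_trans. apply meet_lb2. apply join_ub2.
    + eapply le_trans. apply meet_lb2. apply meet_lb1.
  - apply le_antisym. apply le_top. rewrite distr. apply meet_glb.
    + rewrite <- Ha2. apply join_lub. eapply le_trans; [apply join_ub1|apply join_ub1].
      apply join_ub2.
    + rewrite <- Hb2. apply join_lub. eapply le_trans; [apply join_ub2|apply join_ub1].
      apply join_ub2.
Qed.

Lemma cp_bot : cpair bot top.
Proof. split. apply le_bot, meet_lb1. apply le_antisym. apply le_top. apply join_ub2. Qed.

Lemma compl_cp a : complemented a <-> exists a', cpair a a'.
Proof. reflexivity. Qed.

Lemma sup_nil : sup (fun x : L => In x nil) = bot.
Proof. reflexivity. Qed.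
Lemma sup_cons a s : sup (fun x => In x (a :: s)) = join a (sup (fun x => In x s)).
Proof.
  apply le_antisym.
  - apply sup_lub. intros x [<- | H]. apply join_ub1.
    eapply le_trans; [exact (@sup_ub L (fun x => In x s) x H) | apply join_ub2].
  - apply join_lub. apply sup_ub; left; auto. apply sup_lub; intros x H; exact (@sup_ub L (fun x => In x (a::s)) x (or_intror H)).
Qed.
Lemma sup_img_nil (g : L -> L) : sup (fun y => exists x, In x nil /\ g x = y) = bot.
Proof. apply sup_ext. intro z; split. intros [w [[] _]]. intros []. Qed.
Lemma sup_img_cons (g : L -> L) a s :
  sup (fun y => exists x, In x (a :: s) /\ g x = y)
  = join (g a) (sup (fun y => exists x, In x s /\ g x = y)).
Proof.
  apply le_antisym.
  - apply sup_lub. intros y [x [[<- | H] <-]]. apply join_ub1.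
    eapply le_trans; [apply (@sup_ub L (fun y => exists x, In x s /\ g x = y)); eauto | apply join_ub2].
  - apply join_lub. apply (@sup_ub L (fun y => exists x, In x (a::s) /\ g x = y)); exists a; simpl; auto.
    apply sup_lub; intros y [x [H <-]]; apply (@sup_ub L (fun y => exists x, In x (a::s) /\ g x = y)); exists x; simpl; auto.
Qed.

Lemma list_compl s : (forall a, In a s -> complemented a) -> complemented (sup (fun x => In x s)).
Proof.
  induction s as [|a s IH]; intro H.
  - exists top. apply cp_bot.
  - rewrite sup_cons. destruct (H a (or_introl eq_refl)) as [a' Ha].
    destruct IH as [b' Hb]. intros; apply H; simpl; auto.
    exists (meet a' b'). apply cp_join; auto.
Qed.

Lemma ngrill (F : L -> Prop) a : ~ grill F a -> exists f, F f /\ meet f a = bot.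
Proof.
  intro H. unfold grill in H. apply not_all_ex_not in H. destruct H as [f H].
  apply imply_to_and in H. destruct H as [H1 H2]. exists f; split; auto. apply NNPP; auto.
Qed.

Lemma filter_top (F : L -> Prop) : is_filter F -> F top.
Proof. intros [[x Hx] [Hup _]]. eapply Hup; eauto using le_top. Qed.

Lemma grill_mono (F : L -> Prop) a b : grill F a -> le a b -> grill F b.
Proof.
  intros H Hab f Hf E. apply (H f Hf). apply le_bot. rewrite <- E.
  apply meet_mono; auto using le_refl.
Qed.

Lemma grill_join (F : L -> Prop) a a' b b' : is_filter F -> cpair a a' -> cpair b b' ->
  grill F (join a b) -> grill F a \/ grill F b.
Proof.
  intros HF Ha Hb H.
  destruct (classic (grill F a)); auto. destruct (classic (grill F b)); auto.
  exfalso. destruct (ngrill _ _ H0) as [f1 [Hf1 E1]]. destruct (ngrill _ _ H1) as [f2 [Hf2 E2]].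
  destruct HF as [_ [Hup Hmeet]].
  apply (H (meet f1 f2)); auto.
  apply (cp_disj _ _ _ (cp_join _ _ _ _ Ha Hb)). apply meet_mono.
  apply (cp_le _ _ _ Ha E1). apply (cp_le _ _ _ Hb E2).
Qed.

Lemma grill_nbot (F : L -> Prop) : is_filter F -> ~ grill F bot.
Proof.
  intros [[x Hx] _] H. apply (H x Hx). apply le_bot, meet_lb2.
Qed.

End Lat.

Section Morph.
Variables L L' : coframe.
Variable phi : L -> L'.
Hypothesis Hmono : monotone phi.
Hypothesis Hcm : coframe_morphism phi.

Lemma phi_inf S : phi (inf S) = inf (fun y => exists x, S x /\ phi x = y).
Proof. apply (proj1 Hcm). Qed.

Lemma phi_meet a b : phi (meet a b) = meet (phi a) (phi b).
Proof.
  unfold meet at 1. rewrite phi_inf. apply inf_ext. intro y; split.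
  - intros [x [[-> | ->] <-]]; auto.
  - intros [-> | ->]; eauto.
Qed.

Lemma phi_join a b : phi (join a b) = join (phi a) (phi b).
Proof.
  assert (E : join a b = sup (fun x => In x (a :: b :: nil))).
  { apply sup_ext. intro x; simpl; split. intros [-> | ->]; auto. intros [<- | [<- | []]]; auto. }
  rewrite E, (proj2 Hcm). apply sup_ext. intro y; split.
  - intros [x [[<- | [<- | []]] <-]]; auto.
  - intros [-> | ->]; [exists a | exists b]; simpl; auto.
Qed.

Lemma phi_bot : phi bot = bot.
Proof.
  change (phi (sup (fun x => In x nil)) = bot). rewrite (proj2 Hcm). apply sup_ext. intro z; split. intros [w [[] _]]. intros [].
Qed.

Lemma phi_top : phi top = top.
Proof.
  unfold top at 1. rewrite phi_inf. apply inf_ext. intro y; split. intros [x [[] _]]. intros [].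
Qed.

Lemma phi_cp a a' : cpair _ a a' -> cpair _ (phi a) (phi a').
Proof.
  intros [H1 H2]; split. rewrite <- phi_meet, H1; apply phi_bot.
  rewrite <- phi_join, H2; apply phi_top.
Qed.

Lemma phi_compl a : complemented a -> complemented (phi a).
Proof. intros [a' H]. exists (phi a'). apply phi_cp; auto. Qed.

Lemma preimage_filter (G : L' -> Prop) : is_filter G -> is_filter (preimage phi G).
Proof.
  intros HG. pose proof (filter_top _ _ HG) as Ht. destruct HG as [_ [Hup Hm]].
  unfold preimage; split; [|split].
  - exists top. rewrite phi_top; auto.
  - intros x y Hx Hxy. eapply Hup; eauto.
  - intros x y Hx Hy. rewrite phi_meet; auto.
Qed.

Lemma lower_adj_unit l' : le l' (phi (lower_adj phi l')).
Proof.
  unfold lower_adj. rewrite phi_inf. apply inf_glb. intros y [x [Hx <-]]; auto.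
Qed.

Lemma lower_adj_counit a : le (lower_adj phi (phi a)) a.
Proof. unfold lower_adj. apply inf_lb. apply le_refl. Qed.

End Morph.

Lemma lower_adj_id (L : coframe) (l : L) : lower_adj (fun x => x) l = l.
Proof.
  apply le_antisym. apply inf_lb, le_refl. apply inf_glb; auto.
Qed.

Lemma Mor_id (C : admissible_cat) (L : coframe) : Mor C (fun x : L => x).
Proof. split; [|split]. intros x y H; exact H. intros I _ g; reflexivity. intros J _ g; reflexivity. Qed.

Lemma Mor_cm (C : admissible_cat) (L L' : coframe) (phi : L -> L') :
  Obj C L -> Obj C L' -> Mor C phi -> coframe_morphism phi.
Proof. intros HL HL' [H1 [H2 H3]]. exact (mor_is_coframe_morphism HL HL' H1 H2 H3). Qed.

Section Adh.
Variable L : coframe.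
Variable lim : limT L.

Lemma adh0_mono (l l' : L) : le l l' -> le (adh0 lim l) (adh0 lim l').
Proof.
  intro H. apply sup_lub. intros y [F [HF [Hg ->]]]. apply sup_ub.
  exists F; split; auto; split; auto. eapply grill_mono; eauto.
Qed.

Lemma adh0_bot : adh0 lim bot = bot.
Proof.
  apply le_bot. apply sup_lub. intros y [F [HF [Hg _]]]. exfalso. eapply grill_nbot; eauto.
Qed.

Lemma adh0_join (a a' b b' : L) : cpair _ a a' -> cpair _ b b' ->
  adh0 lim (join a b) = join (adh0 lim a) (adh0 lim b).
Proof.
  intros Ha Hb. apply le_antisym.
  - apply sup_lub. intros y [F [HF [Hg ->]]].
    destruct (grill_join _ _ _ _ _ _ HF Ha Hb Hg) as [H | H].
    + eapply le_trans; [|apply join_ub1]. apply sup_ub. eauto.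
    + eapply le_trans; [|apply join_ub2]. apply sup_ub. eauto.
  - apply join_lub; apply adh0_mono; [apply join_ub1 | apply join_ub2].
Qed.

Lemma adh_compl (a : L) : complemented a -> adh lim a = adh0 lim a.
Proof.
  intro H. apply le_antisym.
  - apply inf_lb. exists a; split; auto; split; auto. apply le_refl.
  - apply inf_glb. intros y [b [_ [Hab ->]]]. apply adh0_mono; auto.
Qed.

Lemma adh_mono (l l' : L) : le l l' -> le (adh lim l) (adh lim l').
Proof.
  intro H. apply inf_glb. intros y [a [Ha [Hla ->]]]. apply inf_lb.
  exists a; split; auto; split; auto. eapply le_trans; eauto.
Qed.

Lemma adh_struct : adherence_structure (adh lim).
Proof.
  split; [|split].
  - intros x y; apply adh_mono.
  - induction s as [|a s IH]; intro Hs.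
    + rewrite sup_img_nil. change (adh lim bot = bot).
      rewrite adh_compl. apply adh0_bot. exists top. apply cp_bot.
    + rewrite sup_img_cons, sup_cons, <- IH by (intros; apply Hs; simpl; auto).
      destruct (Hs a (or_introl eq_refl)) as [a' Ha].
      assert (Hc : complemented (sup (fun x => In x s))).
      { apply list_compl. intros; apply Hs; simpl; auto. }
      destruct Hc as [b' Hb].
      rewrite (adh_compl (join _ _)), (adh_compl a), (adh_compl (sup _)).
      * apply (adh0_join _ _ _ _ Ha Hb).
      * exists b'; auto.
      * exists a'; auto.
      * exists (meet a' b'). apply cp_join; auto.
  - intro l. unfold adh at 1. apply inf_ext. intro y; split.
    + intros [a [Ha [Hla ->]]]. exists a; split; auto; split; auto. symmetry; apply adh_compl; auto.
    + intros [a [Ha [Hla ->]]]. exists a; split; auto; split; auto. apply adh_compl; auto.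
Qed.
End Adh.

Section LimOf.
Variable L : coframe.
Variable nu : L -> L.

Lemma lim_of_mono (F G : L -> Prop) : (forall x, F x -> G x) -> le (lim_of nu F) (lim_of nu G).
Proof.
  intro H. apply inf_glb. intros y [a [Ha [Hg ->]]]. apply inf_lb.
  exists a; split; auto; split; auto. intros f Hf; apply Hg; auto.
Qed.



Lemma lim_of_pretop : pretopological (lim_of nu).
Proof.
  intros I Fs HFs. apply le_antisym.
  - apply inf_glb. intros y [i <-]. apply lim_of_mono. intros x Hx; apply Hx.
  - apply inf_glb. intros y [a [[a' Ha] [Hg ->]]].
    assert (Hex : exists i, grill (Fs i) a).
    { apply NNPP. intro Hn. apply (Hg a').
      - intro i. destruct (classic (grill (Fs i) a)) as [H|H]. exfalso; eauto.
        destruct (ngrill _ _ _ H) as [f [Hf E]].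
        destruct (HFs i) as [_ [Hup _]]. eapply Hup; eauto. eapply cp_le; eauto.
      - rewrite meet_comm. apply Ha. }
    destruct Hex as [i Hi]. eapply le_trans. apply inf_lb. exists i; reflexivity.
    apply inf_lb. exists a; split; [exists a'; auto|]; split; auto.
Qed.

Lemma lim_of_classical : classical_conv (lim_of nu).
Proof.
  assert (K : forall F G : L -> Prop, is_filter G ->
     (forall a, complemented a -> (F a <-> G a)) ->
     forall a, complemented a -> grill F a -> grill G a).
  { intros F G HG HFG a [a' Ha] Hg g Hgg E.
    destruct HG as [_ [Hup _]].
    assert (Ga' : G a') by (eapply Hup; eauto; eapply cp_le; eauto).
    apply HFG in Ga'. apply (Hg a' Ga'). rewrite meet_comm; apply Ha.
    exists a; apply cp_sym; auto. }
  intros F G HF HG HFG. apply inf_ext. intro y; split.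
  - intros [a [Ha [Hg ->]]]. exists a; split; auto; split; auto. eapply K; eauto.
  - intros [a [Ha [Hg ->]]]. exists a; split; auto; split; auto. eapply K; eauto.
    intros b Hb; split; apply HFG; auto.
Qed.
End LimOf.

Lemma general (C : admissible_cat) (P : forall L : coframe, limT L -> Prop)
  (HP1 : forall L lim, P L lim -> conv_obj C lim)
  (HP2 : forall L nu, adh_obj C nu -> P L (lim_of nu)) :
  adjunction_statement C P.
Proof.
  split; [|split; [|split; [|split]]].
  - intros L lim H. split. apply (HP1 _ _ H). apply adh_struct.
  - intros L L' lim lim' phi HL HL' [HM Hc].
    destruct (HP1 _ _ HL) as [OL _]. destruct (HP1 _ _ HL') as [OL' _].
    pose proof (Mor_cm _ _ _ _ OL OL' HM) as Hcm.
    assert (Hmono : monotone phi) by apply HM.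
    split; auto. intro l'.
    unfold adh at 2. rewrite (phi_inf _ _ _ Hcm). apply inf_glb.
    intros y [x [[a [Ha [Hla ->]]] <-]].
    eapply le_trans. apply inf_lb. exists (phi a); split; [apply (phi_compl _ _ _ Hcm); auto|].
    split; [|reflexivity]. eapply le_trans. apply (lower_adj_unit _ _ _ Hcm). apply Hmono; auto.
    apply sup_lub. intros y [G [HG [Hg ->]]].
    eapply le_trans. apply Hc; auto. apply Hmono. apply sup_ub.
    exists (preimage phi G); split; [apply (preimage_filter _ _ _ Hmono Hcm); auto|].
    split; auto. intros l Hl E. apply (Hg _ Hl). rewrite <- (phi_meet _ _ _ Hcm), E.
    apply (phi_bot _ _ _ Hcm).
  - intros L nu [OL Hnu]. apply HP2. split; auto.
  - intros L L' nu nu' phi [OL Hnu] [OL' Hnu'] [HM Ha].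
    pose proof (Mor_cm _ _ _ _ OL OL' HM) as Hcm.
    assert (Hmono : monotone phi) by apply HM.
    destruct Hnu as [Hnum _].
    split; auto. intros F HF.
    unfold lim_of at 2. rewrite (phi_inf _ _ _ Hcm). apply inf_glb.
    intros y [x [[a [[a' Hca] [Hg ->]]] <-]].
    eapply le_trans. apply inf_lb. exists (phi a).
    split; [exists (phi a'); apply (phi_cp _ _ _ Hcm); auto|]. split; [|reflexivity].
    { intros f Hf E. destruct HF as [_ [Hup _]].
      assert (Fa' : F (phi a')).
      { apply (Hup f); auto. apply (cp_le _ (phi a) (phi a') f); [apply (phi_cp _ _ _ Hcm); auto | exact E]. }
      apply (Hg a' Fa'). rewrite meet_comm; apply Hca. }
    eapply le_trans. apply Ha. apply Hmono, Hnum. apply lower_adj_counit.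
  - exists (fun L nu x => x), (fun L lim x => x).
    split; [|split; [|split; [|split; [|split]]]]; try reflexivity.
    + intros L nu [OL [Hm [_ Hinf]]]. split. apply Mor_id. intro l'.
      rewrite lower_adj_id. rewrite (Hinf l'). apply inf_glb.
      intros y [a [Ha [Hla ->]]]. eapply le_trans. apply inf_lb.
      exists a; split; auto; split; auto; reflexivity.
      apply sup_lub. intros y [F [HF [Hg ->]]]. apply inf_lb. exists a; auto.
    + intros L lim H. split. apply Mor_id. intros F HF.
      apply inf_glb. intros y [a [Ha [Hg ->]]]. rewrite adh_compl by auto.
      apply sup_ub. exists F; auto.
Qed.

Theorem mainTheorem9 (C : admissible_cat) :
  adjunction_statement C (pretop_obj C) /\ adjunction_statement C (pretop_cl_obj C).
Proof.
  split; apply general.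
  - intros L lim [H _]; exact H.
  - intros L nu [OL Hnu]. split. split; auto. intros; apply lim_of_mono; auto.
    apply lim_of_pretop.
  - intros L lim [H _]; exact H.
  - intros L nu [OL Hnu]. split. split; auto. intros; apply lim_of_mono; auto.
    split. apply lim_of_pretop. apply lim_of_classical.
Qed.
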